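(* For $n\in\mathbb{N}$ let $f_n(z)=e^{nz}$, $a_n\equiv0$, $b_n\equiv\infty$, and $c_n(z)=-e^{in\,\mathrm{Im}(z)}$ on $\mathbb{D}$. Then $a_n,b_n,c_n:\mathbb{D}\to\widehat{\mathbb{C}}$ are continuous, $f_n$ omits $a_n,b_n,c_n$ (i.e. $f_n(z)\notin\{a_n(z),b_n(z),c_n(z)\}$ for all $z\in\mathbb{D}$), $\sigma(a_n(z),b_n(z))=\pi/2$ and $\sigma(a_n(z),c_n(z))=\sigma(b_n(z),c_n(z))=\pi/4$ for all $n$ and all $z\in\mathbb{D}$, but $(f_n)_n$ is not normal in $\mathbb{D}$. In particular, the conclusion of the statement ''if each $f$ in a family of meromorphic functions on $\mathbb{D}$ omits three functions $a_f,b_f,c_f$ with $\sigma(a_f,b_f)\sigma(a_f,c_f)\sigma(b_f,c_f)\ge\varepsilon$ on $\mathbb{D}$ then the family is normal'' fails if $a_f,b_f,c_f$ are only required to be continuous.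
   Context: $\mathbb{D}$ is the open unit disc, $\widehat{\mathbb{C}}$ the Riemann sphere, and $\sigma$ the spherical (geodesic) metric on $\widehat{\mathbb{C}}$ identified with the sphere of diameter $1$ (so $\sigma(0,\infty)=\pi/2$). Normality is in the sense of Montel: every sequence has a subsequence converging locally uniformly with respect to $\sigma$ to a meromorphic function or to $\infty$. *)

(* Defs.v *)
From Stdlib Require Import Reals.
Open Scope R_scope.

Definition Cpx : Type := (R * R)%type.
Definition Cre (z : Cpx) : R := fst z.
Definition Cim (z : Cpx) : R := snd z.
Definition C0 : Cpx := (0, 0).
Definition Cadd (z w : Cpx) : Cpx := (fst z + fst w, snd z + snd w).
Definition Copp (z : Cpx) : Cpx := (- fst z, - snd z).
Definition Csub (z w : Cpx) : Cpx := Cadd z (Copp w).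
Definition Cmul (z w : Cpx) : Cpx :=
  (fst z * fst w - snd z * snd w, fst z * snd w + snd z * fst w).
Definition Cnorm (z : Cpx) : R := sqrt (fst z * fst z + snd z * snd z).
Definition Cinv (z : Cpx) : Cpx :=
  let d := fst z * fst z + snd z * snd z in (fst z / d, - snd z / d).
Definition Cexp (z : Cpx) : Cpx := (exp (fst z) * cos (snd z), exp (fst z) * sin (snd z)).
Definition RtoC (x : R) : Cpx := (x, 0).

Definition inD (z : Cpx) : Prop := Cnorm z < 1.

Definition Sphere : Type := option Cpx.
Definition infty : Sphere := None.

Definition chordal (p q : Sphere) : R :=
  match p, q with
  | Some z, Some w =>
      Cnorm (Csub z w) / (sqrt (1 + Cnorm z ^ 2) * sqrt (1 + Cnorm w ^ 2))
  | Some z, None | None, Some z => 1 / sqrt (1 + Cnorm z ^ 2)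
  | None, None => 0
  end.

(* spherical (geodesic) metric on the sphere of diameter 1:
   a chord of length c subtends a great-circle arc of length asin c,
   so sph_dist 0 infty = asin 1 = PI/2. *)
Definition sph_dist (p q : Sphere) : R := asin (chordal p q).

Definition Sinv (p : Sphere) : Sphere :=
  match p with
  | None => Some C0
  | Some z => if Req_EM_T (Cnorm z) 0 then None else Some (Cinv z)
  end.

Definition sphere_continuous_on_D (a : Cpx -> Sphere) : Prop :=
  forall z, inD z -> forall eps, 0 < eps -> exists delta, 0 < delta /\
    forall w, inD w -> Cnorm (Csub w z) < delta -> sph_dist (a w) (a z) < eps.

Definition Cdiff_at (g : Cpx -> Cpx) (z0 : Cpx) : Prop :=
  exists L : Cpx, forall eps, 0 < eps -> exists delta, 0 < delta /\
    forall h : Cpx, 0 < Cnorm h < delta ->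
      Cnorm (Csub (Csub (g (Cadd z0 h)) (g z0)) (Cmul L h)) <= eps * Cnorm h.

Definition ball (z0 : Cpx) (r : R) (z : Cpx) : Prop := Cnorm (Csub z z0) < r.

(* On the connected disc this is exactly "meromorphic or == infty". *)
Definition mero_or_infty_on_D (f : Cpx -> Sphere) : Prop :=
  forall z0, inD z0 -> exists r, 0 < r /\ (forall z, ball z0 r z -> inD z) /\
    exists g : Cpx -> Cpx, (forall z, ball z0 r z -> Cdiff_at g z) /\
      ((forall z, ball z0 r z -> f z = Some (g z)) \/
       (forall z, ball z0 r z -> Sinv (f z) = Some (g z))).

(* locally uniform convergence on D w.r.t. sph_dist (uniform on each closed
   disc of radius r < 1, i.e. on each compact subset of D) *)
Definition loc_unif_conv_D (F : nat -> Cpx -> Sphere) (g : Cpx -> Sphere) : Prop :=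
  forall r, 0 <= r < 1 -> forall eps, 0 < eps -> exists N : nat,
    forall k, (N <= k)%nat -> forall z, Cnorm z <= r -> sph_dist (F k z) (g z) < eps.

Definition strictly_incr (phi : nat -> nat) : Prop :=
  forall i j, (i < j)%nat -> (phi i < phi j)%nat.

Definition normal_seq_on_D (F : nat -> Cpx -> Sphere) : Prop :=
  forall phi, strictly_incr phi -> exists psi, strictly_incr psi /\
    exists g, mero_or_infty_on_D g /\ loc_unif_conv_D (fun k => F (phi (psi k))) g.

Definition f_ex (n : nat) (z : Cpx) : Sphere := Some (Cexp (Cmul (RtoC (INR n)) z)).
Definition a_ex (n : nat) (z : Cpx) : Sphere := Some C0.
Definition b_ex (n : nat) (z : Cpx) : Sphere := infty.
Definition c_ex (n : nat) (z : Cpx) : Sphere :=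
  Some (Copp (Cexp (Cmul (0, 1) (RtoC (INR n * Cim z))))).

(* Main.v *)
Require Import Defs.
From Stdlib Require Import Reals Lra Lia.
Open Scope R_scope.

Lemma le_div_helper c A D : 0 < D -> c * D <= A -> c <= A / D.
Proof.
  intros HD H. apply Rmult_le_reg_r with D; auto.
  unfold Rdiv; rewrite Rmult_assoc, Rinv_l by lra; lra.
Qed.

Lemma Rdiv_le0 a b : 0 <= a -> 0 < b -> 0 <= a / b.
Proof. intros; unfold Rdiv; apply Rmult_le_pos; [|left; apply Rinv_0_lt_compat]; auto. Qed.

Lemma asin_lower x : 0 <= x -> Rmin x 1 <= asin x.
Proof.
  intros Hx. pose proof PI_RGT_0 as HP. 
  destruct (Rle_dec 1 x) as [H1|H1].
  - unfold asin. destruct (Rle_dec x (-1)); [lra|].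
    destruct (Rle_dec 1 x); [|lra].
    pose proof PI2_1 as H3. unfold Rmin; destruct (Rle_dec x 1); lra.
  - assert (Hb := asin_bound_lt x ltac:(lra)).
    assert (Hs := sin_asin x ltac:(lra)).
    rewrite Rmin_left by lra.
    destruct (Rtotal_order (asin x) 0) as [Hn|[H0|Hp]].
    + assert (sin (asin x) < 0) by (apply sin_lt_0_var; lra). lra.
    + rewrite H0, sin_0 in Hs. lra.
    + pose proof (sin_lt_x _ Hp). lra.
Qed.

Lemma asin_small x eps : 0 <= x -> 0 < eps -> eps <= 1 -> asin x < eps -> x < eps.
Proof.
  intros Hx He He1 H. pose proof (asin_lower x Hx).
  unfold Rmin in H0; destruct (Rle_dec x 1); lra.
Qed.

Lemma asin_upper x e : 0 < e <= 1 -> 0 <= x < sin e -> asin x < e.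
Proof.
  intros He Hx. pose proof PI2_1 as H3.
  assert (Hs1 := SIN_bound e).
  assert (Hs := sin_asin x ltac:(lra)).
  assert (Hb := asin_bound x).
  destruct (Rlt_or_le (asin x) e) as [H|H]; auto.
  assert (sin e <= sin (asin x)).
  { apply sin_incr_1; lra. }
  lra.
Qed.

Lemma sqrt_ge_abs p q : Rabs p <= sqrt (p*p+q*q).
Proof. rewrite <- sqrt_Rsqr_abs; apply sqrt_le_1_alt; unfold Rsqr; nra. Qed.

Lemma Cnorm_nonneg z : 0 <= Cnorm z.
Proof. apply sqrt_pos. Qed.

Lemma Cnorm_sq z : Cnorm z ^ 2 = fst z * fst z + snd z * snd z.
Proof. unfold Cnorm. apply pow2_sqrt. nra. Qed.

Lemma Cnorm_unit a b : a*a+b*b = 1 -> Cnorm (a,b) = 1.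
Proof. intros H; unfold Cnorm; simpl; rewrite H; apply sqrt_1. Qed.

Lemma Cnorm_C0 : Cnorm C0 = 0.
Proof. unfold Cnorm, C0; simpl. replace (0*0+0*0) with 0 by ring. apply sqrt_0. Qed.

Lemma f_ex_eq n z : f_ex n z =
  Some (exp (INR n * fst z) * cos (INR n * snd z), exp (INR n * fst z) * sin (INR n * snd z)).
Proof.
  unfold f_ex, Cexp, Cmul, RtoC; simpl.
  replace (INR n * fst z - 0 * snd z) with (INR n * fst z) by ring.
  replace (INR n * snd z + 0 * fst z) with (INR n * snd z) by ring. reflexivity.
Qed.

Lemma f_ex_real n x : f_ex n (x,0) = Some (exp (INR n * x), 0).
Proof.
  rewrite f_ex_eq; simpl. rewrite Rmult_0_r, cos_0, sin_0. f_equal; f_equal; ring.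
Qed.

Lemma c_ex_eq n z : c_ex n z = Some (- cos (INR n * snd z), - sin (INR n * snd z)).
Proof.
  unfold c_ex, Cexp, Cmul, RtoC, Copp, Cim; simpl.
  replace (0 * (INR n * snd z) - 1 * 0) with 0 by ring.
  replace (0 * 0 + 1 * (INR n * snd z)) with (INR n * snd z) by ring.
  rewrite exp_0, !Rmult_1_l. reflexivity.
Qed.

Lemma sin_abs_le u : Rabs (sin u) <= Rabs u.
Proof.
  assert (Hpos : forall v, 0 <= v -> Rabs (sin v) <= v).
  { intros v Hv. pose proof (SIN_bound v). pose proof PI2_1.
    destruct (Req_dec v 0) as [->|Hne]. rewrite sin_0, Rabs_R0; lra.
    pose proof (sin_lt_x v ltac:(lra)).
    apply Rabs_le. split; [|lra].
    destruct (Rle_dec 1 v); [lra|].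
    pose proof (sin_gt_0 v ltac:(lra) ltac:(lra)). lra. }
  destruct (Rle_dec 0 u).
  - rewrite (Rabs_right u) by lra. auto.
  - assert (H := Hpos (-u) ltac:(lra)). rewrite sin_neg, Rabs_Ropp in H.
    rewrite (Rabs_left u) by lra. exact H.
Qed.

Lemma circ_dist a b :
  sqrt ((- cos a + - - cos b) * (- cos a + - - cos b) + (- sin a + - - sin b) * (- sin a + - - sin b))
  <= Rabs (a - b).
Proof.
  rewrite <- sqrt_Rsqr_abs. apply sqrt_le_1_alt.
  set (s := sin ((a - b)/2)).
  assert (Hc : cos (a - b) = 1 - 2 * s * s).
  { unfold s. rewrite <- cos_2a_sin. f_equal. field. }
  rewrite cos_minus in Hc.
  pose proof (sin2_cos2 a). pose proof (sin2_cos2 b). unfold Rsqr in *.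
  assert (Hs : Rabs s <= Rabs ((a-b)/2)) by apply sin_abs_le.
  assert (s * s <= ((a-b)/2) * ((a-b)/2)).
  { apply Rsqr_le_abs_1 in Hs. unfold Rsqr in Hs. exact Hs. }
  nra.
Qed.

Lemma sph_self_some z : sph_dist (Some z) (Some z) = 0.
Proof.
  unfold sph_dist, chordal.
  replace (Cnorm (Csub z z)) with 0. unfold Rdiv; rewrite Rmult_0_l; apply asin_0.
  unfold Cnorm, Csub, Cadd, Copp; simpl.
  replace (fst z + - fst z) with 0 by ring. replace (snd z + - snd z) with 0 by ring.
  replace (0*0+0*0) with 0 by ring. now rewrite sqrt_0.
Qed.

Lemma const_cont p : sphere_continuous_on_D (fun _ => p).
Proof.
  intros z _ eps He. exists 1. split; [lra|]. intros w _ _.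
  destruct p as [c|].
  - rewrite sph_self_some; lra.
  - unfold sph_dist, chordal. rewrite asin_0; lra.
Qed.

Lemma c_cont n : sphere_continuous_on_D (c_ex n).
Proof.
  intros z _ eps He.
  set (e := Rmin eps 1).
  assert (He1 : 0 < e <= 1) by (unfold e, Rmin; destruct (Rle_dec eps 1); lra).
  assert (Hse : 0 < sin e) by (pose proof PI2_1; apply sin_gt_0; lra).
  pose proof (pos_INR n) as Hn.
  exists (sin e / (INR n + 1)). split.
  { apply Rdiv_lt_0_compat; lra. }
  intros w _ Hw.
  apply Rlt_le_trans with e; [|unfold e; apply Rmin_l].
  rewrite !c_ex_eq. unfold sph_dist, chordal.
  rewrite !Cnorm_unit by (pose proof (sin2_cos2 (INR n * snd w)); pose proof (sin2_cos2 (INR n * snd z)); unfold Rsqr in *; nra).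
  apply asin_upper; auto.
  unfold Csub, Cadd, Copp; simpl fst; simpl snd.
  pose proof (circ_dist (INR n * snd w) (INR n * snd z)) as Hc.
  set (D := sqrt _) in *.
  assert (HD : 0 <= D) by apply sqrt_pos.
  assert (Hy : Rabs (snd w - snd z) <= Cnorm (Csub w z)).
  { unfold Cnorm, Csub, Cadd, Copp; simpl.
    rewrite Rplus_comm. apply sqrt_ge_abs. }
  replace (INR n * snd w - INR n * snd z) with (INR n * (snd w - snd z)) in Hc by ring.
  rewrite Rabs_mult, (Rabs_right (INR n)) in Hc by lra.
  assert (Hdel : (INR n + 1) * (sin e / (INR n + 1)) = sin e) by (field; lra).
  assert (Hs2 : sqrt (1 + 1^2) * sqrt (1 + 1^2) = 2).
  { rewrite sqrt_sqrt; lra. }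
  rewrite Hs2.
  assert (D <= INR n * (sin e / (INR n + 1))).
  { apply Rle_trans with (1 := Hc). apply Rmult_le_compat_l; lra. }
  assert (0 < sin e / (INR n + 1)) by (apply Rdiv_lt_0_compat; lra).
  unfold Cnorm; simpl fst; simpl snd. fold D.
  set (q := sin e / (INR n + 1)) in *.
  rewrite Rmult_plus_distr_r, Rmult_1_l in Hdel. lra.
Qed.

Lemma part2 n z : f_ex n z <> a_ex n z /\ f_ex n z <> b_ex n z /\ f_ex n z <> c_ex n z.
Proof.
  rewrite f_ex_eq. unfold a_ex, b_ex. rewrite c_ex_eq.
  set (E := exp (INR n * fst z)). assert (HE : 0 < E) by apply exp_pos.
  set (t := INR n * snd z). pose proof (sin2_cos2 t) as Hsc. unfold Rsqr in Hsc.
  split; [|split]; try discriminate; intros H; injection H; intros H1 H2.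
  - apply Rmult_integral in H1; apply Rmult_integral in H2. nra.
  - assert ((E + 1) * cos t = 0) by lra. assert ((E + 1) * sin t = 0) by lra.
    apply Rmult_integral in H0; apply Rmult_integral in H3. nra.
Qed.

Lemma part3 n z : sph_dist (a_ex n z) (b_ex n z) = PI / 2 /\
     sph_dist (a_ex n z) (c_ex n z) = PI / 4 /\
     sph_dist (b_ex n z) (c_ex n z) = PI / 4.
Proof.
  unfold a_ex, b_ex. rewrite c_ex_eq. unfold sph_dist, chordal.
  assert (Hu : forall a b, a*a+b*b = 1 -> Cnorm (a,b) = 1) by apply Cnorm_unit.
  pose proof (sin2_cos2 (INR n * snd z)) as Hsc. unfold Rsqr in Hsc.
  rewrite Cnorm_C0.
  rewrite Hu by nra.
  split; [|split].
  - replace (1 + 0^2) with 1 by ring. rewrite sqrt_1. replace (1/1) with 1 by field. apply asin_1.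
  - replace (Cnorm (Csub C0 _)) with 1.
    2:{ unfold Csub, Cadd, Copp, C0; simpl. symmetry; apply Hu. nra. }
    replace (1 + 0^2) with 1 by ring. replace (1 + 1^2) with 2 by ring. rewrite sqrt_1.
    rewrite <- asin_inv_sqrt2. f_equal. field. apply sqrt2_neq_0.
  - replace (1 + 1^2) with 2 by ring. rewrite <- asin_inv_sqrt2. f_equal. simpl. field. apply sqrt2_neq_0.
Qed.

Lemma psi_ge psi : strictly_incr psi -> forall k, (k <= psi k)%nat.
Proof.
  intros H k. induction k. lia. specialize (H k (S k) ltac:(lia)). lia.
Qed.

Lemma sqrt_1u_le u : 0 <= u -> sqrt (1 + Cnorm (u, 0) ^ 2) <= 1 + u.
Proof.
  intros Hu. rewrite Cnorm_sq; simpl.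
  rewrite <- (sqrt_pow2 (1 + u)) by lra. apply sqrt_le_1_alt. nra.
Qed.

Lemma sqrt_pos1 c : 0 < sqrt (1 + Cnorm c ^ 2).
Proof. apply sqrt_lt_R0. pose proof (pow2_ge_0 (Cnorm c)). lra. Qed.

Lemma pos_noconv psi x w : strictly_incr psi -> 0 < x ->
  ~ (forall eps, 0 < eps -> exists N, forall k, (N <= k)%nat ->
       sph_dist (f_ex (psi k) (x,0)) (Some w) < eps).
Proof.
  intros Hpsi Hx H.
  set (S := sqrt (1 + Cnorm w ^ 2)). assert (HS : 0 < S) by apply sqrt_pos1.
  set (eps := Rmin 1 (/ (2 * S))).
  assert (Hinv : 0 < / (2 * S)) by (apply Rinv_0_lt_compat; lra).
  assert (He : 0 < eps <= 1) by (unfold eps, Rmin; destruct (Rle_dec 1 (/(2*S))); lra).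
  destruct (H eps ltac:(lra)) as [N HN].
  destruct (INR_archimed x (2 * Rabs (fst w)) Hx) as [K HK].
  set (k := Nat.max N K).
  specialize (HN k ltac:(unfold k; lia)).
  rewrite f_ex_real in HN.
  set (u := exp (INR (psi k) * x)) in HN.
  assert (Hu : 2 * Rabs (fst w) + 1 <= u).
  { unfold u. eapply Rle_trans; [|apply exp_ineq1_le].
    assert (INR K <= INR (psi k)) by (apply le_INR; pose proof (psi_ge psi Hpsi k); unfold k in *; lia).
    assert (INR K * x <= INR (psi k) * x) by (apply Rmult_le_compat_r; lra). lra. }
  unfold sph_dist, chordal in HN. fold S in HN.
  apply asin_small in HN; [| apply Rdiv_le0; [apply sqrt_pos|] ; apply Rmult_lt_0_compat; [apply sqrt_pos1|lra] | lra | lra].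
  assert (Hge : / (2 * S) <= Cnorm (Csub (u, 0) w) / (sqrt (1 + Cnorm (u, 0) ^ 2) * S)).
  { apply le_div_helper. apply Rmult_lt_0_compat; [apply sqrt_pos1|lra].
    pose proof (Rabs_pos (fst w)). pose proof (sqrt_1u_le u ltac:(lra)).
    assert (Hab : Rabs (u + - fst w) <= Cnorm (Csub (u, 0) w)).
    { unfold Cnorm, Csub, Cadd, Copp; simpl. apply sqrt_ge_abs. }
    pose proof (Rabs_triang_inv u (fst w)). rewrite (Rabs_right u) in H2 by lra.
    replace (/ (2 * S) * (sqrt (1 + Cnorm (u, 0) ^ 2) * S)) with (sqrt (1 + Cnorm (u, 0) ^ 2) / 2) by (field; lra).
    unfold Rminus in H2. lra. }
  assert (eps <= / (2 * S)) by apply Rmin_r. lra.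
Qed.

Lemma neg_conv psi x v : strictly_incr psi -> x < 0 ->
  (forall eps, 0 < eps -> exists N, forall k, (N <= k)%nat ->
       sph_dist (f_ex (psi k) (x,0)) v < eps) ->
  exists w, v = Some w /\ Cnorm w = 0.
Proof.
  intros Hpsi Hx H.
  assert (Hu1 : forall k, 0 < exp (INR (psi k) * x) <= 1).
  { intros k. split. apply exp_pos. rewrite <- exp_0.
    destruct (Req_dec (INR (psi k) * x) 0) as [->|]; [lra|].
    left; apply exp_increasing. pose proof (pos_INR (psi k)). nra. }
  destruct v as [w|].
  - exists w. split; auto.
    destruct (Req_dec (Cnorm w) 0) as [|Hm]; auto. exfalso.
    set (m := Cnorm w). assert (Hm0 : 0 < m) by (pose proof (Cnorm_nonneg w); unfold m in *; lra).
    set (S := sqrt (1 + Cnorm w ^ 2)). assert (HS : 0 < S) by apply sqrt_pos1.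
    set (eps := Rmin 1 (m / (4 * S))).
    assert (Hinv : 0 < m / (4 * S)) by (apply Rdiv_lt_0_compat; lra).
    assert (He : 0 < eps <= 1) by (unfold eps, Rmin; destruct (Rle_dec 1 (m/(4*S))); lra).
    destruct (H eps ltac:(lra)) as [N HN].
    destruct (INR_archimed (-x) (2 / m) ltac:(lra)) as [K HK].
    set (k := Nat.max N K).
    specialize (HN k ltac:(unfold k; lia)).
    rewrite f_ex_real in HN.
    specialize (Hu1 k).
    set (u := exp (INR (psi k) * x)) in HN, Hu1.
    assert (Hu : u <= m / 2).
    { assert (INR K <= INR (psi k)) by (apply le_INR; pose proof (psi_ge psi Hpsi k); unfold k in *; lia).
      assert (INR K * (-x) <= INR (psi k) * (-x)) by (apply Rmult_le_compat_r; lra).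
      set (E := exp (INR (psi k) * - x)).
      assert (HE : 1 + INR (psi k) * - x <= E) by apply exp_ineq1_le.
      assert (HuE : u * E = 1).
      { unfold u, E. rewrite <- exp_plus. replace (_ + _) with 0 by ring. apply exp_0. }
      assert (2 / m * u < E * u) by (apply Rmult_lt_compat_r; lra).
      replace (2 / m * u) with (2 * u / m) in H2 by (field; lra).
      rewrite (Rmult_comm E u), HuE in H2.
      assert (H3 : 2 * u / m < 1) by lra.
      apply Rmult_lt_compat_r with (r := m) in H3; [|lra].
      replace (2 * u / m * m) with (2 * u) in H3 by (field; lra). lra. }
    unfold sph_dist, chordal in HN. fold S in HN.
    apply asin_small in HN; [| apply Rdiv_le0; [apply sqrt_pos|] ; apply Rmult_lt_0_compat; [apply sqrt_pos1|lra] | lra | lra].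
    assert (Hge : m / (4 * S) <= Cnorm (Csub (u, 0) w) / (sqrt (1 + Cnorm (u, 0) ^ 2) * S)).
    { apply le_div_helper. apply Rmult_lt_0_compat; [apply sqrt_pos1|lra].
      pose proof (sqrt_1u_le u ltac:(lra)).
      assert (Hab : m - u <= Cnorm (Csub (u, 0) w)).
      { unfold Cnorm at 1, Csub, Cadd, Copp; simpl.
        rewrite <- (sqrt_pow2 (m - u)) by lra. apply sqrt_le_1_alt.
        assert (Hm2 : m ^ 2 = fst w * fst w + snd w * snd w) by apply Cnorm_sq.
        assert (Habs : Rabs (fst w) <= m) by apply sqrt_ge_abs.
        assert (fst w <= Rabs (fst w)) by apply RRle_abs.
        nra. }
      replace (m / (4 * S) * (sqrt (1 + Cnorm (u, 0) ^ 2) * S)) with (m * sqrt (1 + Cnorm (u, 0) ^ 2) / 4) by (field; lra).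
      assert (m * sqrt (1 + Cnorm (u, 0) ^ 2) <= m * 2) by (apply Rmult_le_compat_l; lra).
      lra. }
    assert (eps <= m / (4 * S)) by apply Rmin_r. lra.
  - exfalso.
    destruct (H (/2) ltac:(lra)) as [N HN].
    specialize (HN N (le_n _)). specialize (Hu1 N).
    rewrite f_ex_real in HN. set (u := exp (INR (psi N) * x)) in HN, Hu1.
    unfold sph_dist, chordal in HN.
    pose proof (sqrt_1u_le u ltac:(lra)). pose proof (sqrt_pos1 (u,0)).
    apply asin_small in HN; [|apply Rdiv_le0; lra|lra|lra].
    assert (/2 <= 1 / sqrt (1 + Cnorm (u, 0) ^ 2)).
    { apply le_div_helper; lra. }
    lra.
Qed.

Lemma conv_at psi g p : loc_unif_conv_D (fun k => f_ex (psi k)) g -> inD p ->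
  forall eps, 0 < eps -> exists N, forall k, (N <= k)%nat -> sph_dist (f_ex (psi k) p) (g p) < eps.
Proof.
  intros H Hp eps He. destruct (H (Cnorm p) ltac:(split; [apply Cnorm_nonneg|exact Hp]) eps He) as [N HN].
  exists N. intros k Hk. apply HN; auto. lra.
Qed.

Lemma Cnorm_real_ball x : Cnorm (Csub (x, 0) C0) = Rabs x.
Proof.
  unfold Cnorm, Csub, Cadd, Copp, C0; simpl.
  replace ((x + - 0) * (x + - 0) + (0 + - 0) * (0 + - 0)) with (Rsqr x) by (unfold Rsqr; ring).
  apply sqrt_Rsqr_abs.
Qed.

Lemma part4 : ~ normal_seq_on_D f_ex.
Proof.
  intros H. destruct (H (fun i => i)) as [psi [Hpsi [g [Hg Hconv]]]].
  { intros i j; auto. }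
  destruct (Hg C0) as [r [Hr [Hin [G [_ [H1|H2]]]]]].
  { unfold inD; rewrite Cnorm_C0; lra. }
  - assert (Hb : ball C0 r (r/2, 0)).
    { unfold ball. rewrite Cnorm_real_ball, Rabs_right; lra. }
    apply (pos_noconv psi (r/2) (G (r/2,0)) Hpsi ltac:(lra)).
    rewrite <- (H1 _ Hb). apply conv_at; auto.
  - assert (Hb : ball C0 r (-(r/2), 0)).
    { unfold ball. rewrite Cnorm_real_ball, Rabs_left; lra. }
    destruct (neg_conv psi (-(r/2)) (g (-(r/2),0)) Hpsi ltac:(lra)) as [w [Hw Hw0]].
    { apply conv_at; auto. }
    specialize (H2 _ Hb). rewrite Hw in H2. simpl in H2.
    destruct (Req_EM_T (Cnorm w) 0); [discriminate|contradiction].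
Qed.

Theorem mainTheorem2 :
  (forall n : nat,
     sphere_continuous_on_D (a_ex n) /\
     sphere_continuous_on_D (b_ex n) /\
     sphere_continuous_on_D (c_ex n)) /\
  (forall (n : nat) (z : Cpx), inD z ->
     f_ex n z <> a_ex n z /\ f_ex n z <> b_ex n z /\ f_ex n z <> c_ex n z) /\
  (forall (n : nat) (z : Cpx), inD z ->
     sph_dist (a_ex n z) (b_ex n z) = PI / 2 /\
     sph_dist (a_ex n z) (c_ex n z) = PI / 4 /\
     sph_dist (b_ex n z) (c_ex n z) = PI / 4) /\
  ~ normal_seq_on_D f_ex.
Proof.
  split; [|split; [|split]].
  - intros n. split; [|split]. apply (const_cont (Some C0)). apply (const_cont None). apply c_cont.
  - intros n z _. apply part2.
  - intros n z _. apply part3.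
  - apply part4.
Qed.
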